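(* For every integer $t$, \begin{align*} \sum_{n=1}^\infty\binom{2n}{n}\frac{O_nL_{n+t}}{12^n}&=\frac{\sqrt{15}\sqrt{\alpha+2}}{10}\left((\alpha^t+\beta^{t+1})\ln\alpha-(\alpha^t-\beta^{t+1})\ln\Bigl(\frac{\sqrt5}{3}\Bigr)\right),\\ \sum_{n=1}^\infty\binom{2n}{n}\frac{O_nF_{n+t}}{12^n}&=\frac{\sqrt3\sqrt{\alpha+2}}{10}\left((\alpha^t-\beta^{t+1})\ln\alpha-(\alpha^t+\beta^{t+1})\ln\Bigl(\frac{\sqrt5}{3}\Bigr)\right), \end{align*} and, for every gibonacci sequence $G_j=G_j(a,b)$, \begin{align*} \sum_{n=1}^\infty\binom{2n}{n}\frac{O_nG_{n+t}}{12^n}&=\frac{\sqrt3\sqrt{\alpha+2}}{10}\Bigl(\bigl(a(\alpha^{t-1}-\beta^t)+b(\alpha^t-\beta^{t+1})\bigr)\ln\alpha\\ &\qquad-\bigl(a(\alpha^{t-1}+\beta^t)+b(\alpha^t+\beta^{t+1})\bigr)\ln\Bigl(\frac{\sqrt5}{3}\Bigr)\Bigr). \end{align*}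
   Context: $O_n=\sum_{j=1}^n\frac1{2j-1}$. $F_n$ and $L_n$ are the Fibonacci and Lucas numbers ($F_0=0,F_1=1$, $L_0=2,L_1=1$, $u_n=u_{n-1}+u_{n-2}$), extended to all integers by the recurrence. $\alpha=(1+\sqrt5)/2$, $\beta=-1/\alpha$. For numbers $a,b$ not both zero, the gibonacci sequence $G_j=G_j(a,b)$ is defined by $G_0=a$, $G_1=b$, $G_j=G_{j-1}+G_{j-2}$, extended to negative indices by $G_{-j}=G_{-(j-2)}-G_{-(j-1)}$; equivalently $G_j=\frac{(b-a\beta)\alpha^j+(a\alpha-b)\beta^j}{\alpha-\beta}$. *)

(* Defs.v *)
From Stdlib Require Import Reals ZArith.
From Coquelicot Require Import Coquelicot.
Open Scope R_scope.

Fixpoint Onum (n : nat) : R :=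
  match n with
  | 0%nat => 0
  | S m => Onum m + / (2 * INR (S m) - 1)
  end.

Fixpoint gib_pos (a b : R) (n : nat) : R :=
  match n with
  | 0%nat => a
  | 1%nat => b
  | S ((S m) as k) => gib_pos a b k + gib_pos a b m
  end.

(* backward part: gib_neg a b n = G_{-n}, using G_{-j} = G_{-(j-2)} - G_{-(j-1)} *)
Fixpoint gib_neg (a b : R) (n : nat) : R :=
  match n with
  | 0%nat => a
  | 1%nat => b - a
  | S ((S m) as k) => gib_neg a b m - gib_neg a b k
  end.

Definition G (a b : R) (j : Z) : R :=
  match j with
  | Z0 => a
  | Zpos p => gib_pos a b (Pos.to_nat p)
  | Zneg p => gib_neg a b (Pos.to_nat p)
  end.

Definition Fib (j : Z) : R := G 0 1 j.
Definition Luc (j : Z) : R := G 2 1 j.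

Definition alpha : R := (1 + sqrt 5) / 2.
Definition beta : R := - / alpha.

(* Main.v *)
Require Import Defs.
From Stdlib Require Import Reals ZArith.
From Coquelicot Require Import Coquelicot.
From Stdlib Require Import Lia Lra Psatz.
Open Scope R_scope.


Definition bc (n : nat) : R := Binomial.C (2 * n) n.
Definition ac (n : nat) : R := bc n * Onum n.

Lemma bc_S n : bc (S n) = bc n * (4 * INR n + 2) / (INR n + 1).
Proof.
  unfold bc, Binomial.C.
  replace (2 * S n)%nat with (S (S (2 * n))) by lia.
  replace (S (S (2 * n)) - S n)%nat with (S n) by lia.
  replace (2 * n - n)%nat with n by lia.
  change (Factorial.fact (S (S (2 * n)))) with (S (S (2*n)) * Factorial.fact (S (2*n)))%nat.
  change (Factorial.fact (S (2 * n))) with (S (2*n) * Factorial.fact (2*n))%nat.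
  change (Factorial.fact (S n)) with (S n * Factorial.fact n)%nat.
  rewrite !mult_INR, !S_INR, mult_INR.
  simpl (INR 2).
  assert (H1 := INR_fact_neq_0 n). assert (H2 := INR_fact_neq_0 (2*n)).
  assert (H3 : INR n + 1 <> 0) by (pose proof (pos_INR n); lra).
  field. split; auto.
Qed.

Lemma bc_0 : bc 0 = 1.
Proof. unfold bc, Binomial.C. simpl. field. Qed.

Lemma bc_bound n : 0 <= bc n <= 4 ^ n.
Proof.
  induction n as [|n IH].
  - rewrite bc_0. simpl; lra.
  - rewrite bc_S. pose proof (pos_INR n). simpl.
    split.
    + apply Rmult_le_pos; [apply Rmult_le_pos; lra| ]. apply Rlt_le, Rinv_0_lt_compat; lra.
    + unfold Rdiv. apply (Rmult_le_reg_r (INR n + 1)); [lra|].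
      rewrite Rmult_assoc, Rinv_l by lra. nra.
Qed.

Lemma Onum_S n : Onum (S n) = Onum n + / (2 * INR n + 1).
Proof. change (Onum (S n)) with (Onum n + / (2 * INR (S n) - 1)). rewrite S_INR. f_equal. f_equal. ring. Qed.

Lemma Onum_bound n : 0 <= Onum n <= 2 * (3/2) ^ n.
Proof.
  induction n as [|n IH].
  - simpl; lra.
  - rewrite Onum_S. pose proof (pos_INR n).
    assert (0 < / (2 * INR n + 1) <= 1).
    { split. apply Rinv_0_lt_compat; lra.
      rewrite <- Rinv_1. apply Rinv_le_contravar; lra. }
    assert (1 <= (3/2)^n) by (apply pow_R1_Rle; lra).
    simpl. lra.
Qed.

Lemma ac_S n : INR (S n) * ac (S n) = (4 * INR n + 2) * ac n + 2 * bc n.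
Proof.
  unfold ac. rewrite bc_S, Onum_S, S_INR. pose proof (pos_INR n).
  field. lra.
Qed.

Lemma bc_S' n : INR (S n) * bc (S n) = (4 * INR n + 2) * bc n.
Proof. rewrite bc_S, S_INR. pose proof (pos_INR n). field. lra. Qed.

Lemma radius_bound (c : nat -> R) M : (forall n, Rabs (c n) <= M * 6 ^ n) ->
  Rbar_le (Finite (1/6)) (CV_radius c).
Proof.
  intros H. destruct (CV_radius_bounded c) as [Hub _].
  apply Hub. exists M. intros n. rewrite Rabs_mult.
  rewrite <- RPow_abs. rewrite (Rabs_right (1/6)) by lra.
  eapply Rle_trans. apply Rmult_le_compat_r. apply pow_le; lra. apply H.
  rewrite Rmult_assoc, <- Rpow_mult_distr. replace (6 * (1/6)) with 1 by field.
  rewrite pow1. lra.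
Qed.

Lemma bc_radius : Rbar_le (Finite (1/6)) (CV_radius bc).
Proof.
  apply (radius_bound _ 1). intros n. destruct (bc_bound n).
  rewrite Rabs_right by lra. assert (4^n <= 6^n) by (apply pow_incr; lra). lra.
Qed.

Lemma ac_radius : Rbar_le (Finite (1/6)) (CV_radius ac).
Proof.
  apply (radius_bound _ 2). intros n. destruct (bc_bound n). destruct (Onum_bound n).
  unfold ac. rewrite Rabs_right by (apply Rle_ge, Rmult_le_pos; lra).
  replace (6 ^ n) with (4^n * (3/2)^n) by (rewrite <- Rpow_mult_distr; f_equal; lra).
  nra.
Qed.

Lemma in_rad c x : Rbar_le (Finite (1/6)) (CV_radius c) -> Rabs x < 1/6 -> Rbar_lt (Rabs x) (CV_radius c).
Proof. intros H Hx. eapply Rbar_lt_le_trans; [|exact H]. simpl. exact Hx. Qed.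

Lemma ode_gen c e x v : Rbar_le (Finite (1/6)) (CV_radius c) -> Rabs x < 1/6 ->
  (forall n, PS_derive c n - 4 * (PS_incr_1 (PS_derive c)) n = e n) ->
  is_pseries e x v ->
  (1 - 4 * x) * PSeries (PS_derive c) x = v.
Proof.
  intros Hc Hx Hco Hv.
  pose proof (in_rad _ _ Hc Hx) as Hr.
  pose proof (PSeries_correct _ _ (ex_pseries_derive _ _ Hr)) as HD.
  pose proof (is_pseries_incr_1 _ _ _ HD) as HI.
  assert (HS := is_pseries_scal 4 _ _ _ (Rmult_comm _ _) HI).
  pose proof (is_pseries_minus _ _ _ _ _ HD HS) as HM.
  assert (HM' : is_pseries e x (plus (PSeries (PS_derive c) x) (opp (scal 4 (scal x (PSeries (PS_derive c) x)))))).
  { eapply is_pseries_ext; [|exact HM]. intros n. rewrite <- Hco. reflexivity. }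
  apply is_pseries_unique in HM'. apply is_pseries_unique in Hv.
  rewrite <- Hv, HM'. unfold plus, opp, scal; simpl. unfold mult; simpl. ring.
Qed.

Lemma B_ode x : Rabs x < 1/6 -> (1 - 4 * x) * PSeries (PS_derive bc) x = 2 * PSeries bc x.
Proof.
  intros Hx.
  apply (ode_gen _ (PS_scal 2 bc)); [apply bc_radius|exact Hx| |].
  - intros n. unfold PS_scal, PS_incr_1, PS_derive, scal; cbn -[INR bc]. unfold mult; cbn -[INR bc].
    destruct n as [|n].
    + rewrite (bc_S' 0). simpl. ring.
    + rewrite (bc_S' (S n)). ring.
  - change (2 * PSeries bc x) with (scal 2 (PSeries bc x)).
    apply (@is_pseries_scal R_AbsRing R_NormedModule). apply Rmult_comm. apply PSeries_correct.
    apply CV_radius_inside. apply in_rad; [apply bc_radius|exact Hx].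
Qed.

Lemma F_ode x : Rabs x < 1/6 -> (1 - 4 * x) * PSeries (PS_derive ac) x = 2 * PSeries ac x + 2 * PSeries bc x.
Proof.
  intros Hx.
  apply (ode_gen _ (PS_plus (PS_scal 2 ac) (PS_scal 2 bc))); [apply ac_radius|exact Hx| |].
  - intros n. unfold PS_plus, PS_scal, PS_incr_1, PS_derive, scal, plus; cbn -[INR bc ac]. unfold mult; cbn -[INR bc ac].
    destruct n as [|n].
    + rewrite (ac_S 0). simpl. ring.
    + rewrite (ac_S (S n)). ring.
  - change (2 * PSeries ac x + 2 * PSeries bc x) with (plus (scal 2 (PSeries ac x)) (scal 2 (PSeries bc x))).
    apply (@is_pseries_plus R_AbsRing R_NormedModule); apply (@is_pseries_scal R_AbsRing R_NormedModule); try apply Rmult_comm; apply PSeries_correct;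
    apply CV_radius_inside; apply in_rad; try exact Hx; [apply ac_radius|apply bc_radius].
Qed.

Lemma const_lem (f : R -> R) : (forall t, Rabs t < 1/6 -> is_derive f t 0) ->
  forall x, Rabs x < 1/6 -> f x = f 0.
Proof.
  intros H x Hx.
  destruct (Rtotal_order x 0) as [Hl|[He|Hg]].
  - apply eq_is_derive; [|exact Hl]. intros t Ht. apply H.
    apply Rabs_def1; apply Rabs_def2 in Hx; lra.
  - subst; reflexivity.
  - symmetry. apply eq_is_derive; [|exact Hg]. intros t Ht. apply H.
    apply Rabs_def1; apply Rabs_def2 in Hx; lra.
Qed.

Lemma sqrt_der t : t < 1/4 -> is_derive (fun t => sqrt (1 - 4 * t)) t (-2 / sqrt (1 - 4*t)).
Proof.
  intros Ht. auto_derive. lra.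
  assert (0 < sqrt (1 - 4*t)) by (apply sqrt_lt_R0; lra).
  replace (1 + - (4 * t)) with (1 - 4*t) by ring. field. lra.
Qed.

Lemma der_val (f : R -> R) x l l' : is_derive f x l -> l = l' -> is_derive f x l'.
Proof. intros H ->. exact H. Qed.

Lemma B_closed x : Rabs x < 1/6 -> PSeries bc x = / sqrt (1 - 4 * x).
Proof.
  intros Hx.
  assert (Hc : forall y, Rabs y < 1/6 -> (fun t => sqrt (1 - 4*t) * PSeries bc t) y = (fun t => sqrt (1 - 4*t) * PSeries bc t) 0).
  { apply const_lem. intros t Ht.
    assert (Ht' : t < 1/4) by (apply Rabs_def2 in Ht; lra).
    pose proof (is_derive_mult _ _ t _ _ (sqrt_der t Ht') (is_derive_PSeries bc t (in_rad _ _ bc_radius Ht)) Rmult_comm) as H.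
    eapply der_val. exact H.
    pose proof (B_ode t Ht) as Ho.
    assert (Hs : 0 < sqrt (1 - 4*t)) by (apply sqrt_lt_R0; lra).
    assert (Hs2 : sqrt (1 - 4*t) * sqrt (1 - 4*t) = 1 - 4*t) by (apply sqrt_sqrt; lra).
    unfold plus, mult; simpl.
    rewrite <- Hs2 in Ho.
    set (s := sqrt (1 - 4*t)) in *. set (B := PSeries bc t) in *. set (D := PSeries (PS_derive bc) t) in *.
    assert (D = 2 * B / (s*s)) by (rewrite <- Ho; field; lra).
    rewrite H0. field. lra. }
  specialize (Hc x Hx). simpl in Hc. rewrite PSeries_0, bc_0 in Hc.
  replace (1 - 4*0) with 1 in Hc by ring. rewrite sqrt_1 in Hc.
  assert (Hs : 0 < sqrt (1 - 4*x)) by (apply sqrt_lt_R0; apply Rabs_def2 in Hx; lra).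
  apply (Rmult_eq_reg_l (sqrt (1 - 4*x))); [|lra]. rewrite Hc. field. lra.
Qed.

Lemma F_closed x : Rabs x < 1/6 -> PSeries ac x = - ln (1 - 4 * x) / (2 * sqrt (1 - 4 * x)).
Proof.
  intros Hx.
  assert (Hc : forall y, Rabs y < 1/6 -> (fun t => sqrt (1 - 4*t) * PSeries ac t + ln (1 - 4*t) / 2) y = (fun t => sqrt (1 - 4*t) * PSeries ac t + ln (1 - 4*t) / 2) 0).
  { apply const_lem. intros t Ht.
    assert (Ht' : t < 1/4) by (apply Rabs_def2 in Ht; lra).
    pose proof (is_derive_mult _ _ t _ _ (sqrt_der t Ht') (is_derive_PSeries ac t (in_rad _ _ ac_radius Ht)) Rmult_comm) as H.
    assert (Hl : is_derive (fun t => ln (1 - 4*t) / 2) t (-2 / (1 - 4*t))).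
    { auto_derive. lra. field. lra. }
    pose proof (is_derive_plus _ _ t _ _ H Hl) as H2.
    eapply der_val. exact H2.
    pose proof (F_ode t Ht) as Ho. rewrite (B_closed t Ht) in Ho.
    assert (Hs : 0 < sqrt (1 - 4*t)) by (apply sqrt_lt_R0; lra).
    assert (Hs2 : sqrt (1 - 4*t) * sqrt (1 - 4*t) = 1 - 4*t) by (apply sqrt_sqrt; lra).
    unfold plus, mult; simpl.
    set (s := sqrt (1 - 4*t)) in *.
    rewrite <- Hs2 in Ho |- *. set (B := PSeries ac t) in *. set (D := PSeries (PS_derive ac) t) in *.
    assert (D = (2 * B + 2 * / s) / (s*s)) by (rewrite <- Ho; field; lra).
    rewrite H0. field. lra. }
  specialize (Hc x Hx). simpl in Hc. rewrite PSeries_0 in Hc.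
  replace (1 - 4*0) with 1 in Hc by ring. rewrite sqrt_1, ln_1 in Hc.
  unfold ac in Hc. rewrite bc_0 in Hc. simpl Onum in Hc.
  assert (Hs : 0 < sqrt (1 - 4*x)) by (apply sqrt_lt_R0; apply Rabs_def2 in Hx; lra).
  apply (Rmult_eq_reg_l (sqrt (1 - 4*x))); [|lra].
  change (PSeries (fun n : nat => bc n * Onum n) x) with (PSeries ac x) in Hc.
  replace (sqrt (1 - 4 * x) * PSeries ac x) with (- (ln (1 - 4 * x) / 2)) by lra.
  field. lra.
Qed.

Lemma core x : Rabs x < 1/6 ->
  is_series (fun k => ac (S k) * x ^ (S k)) (- ln (1 - 4 * x) / (2 * sqrt (1 - 4 * x))).
Proof.
  intros Hx. rewrite <- (F_closed x Hx).
  apply (is_series_incr_1 (fun n => ac n * x ^ n)).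
  assert (H0 : ac 0 = 0) by (unfold ac; simpl; ring).
  rewrite H0. unfold plus; simpl. replace (PSeries ac x + 0 * 1) with (PSeries ac x) by ring.
  apply is_pseries_R. apply PSeries_correct. apply CV_radius_inside.
  apply in_rad; [apply ac_radius|exact Hx].
Qed.

Lemma s5_facts : 0 < sqrt 5 /\ sqrt 5 * sqrt 5 = 5.
Proof. split. apply sqrt_lt_R0; lra. apply sqrt_sqrt; lra. Qed.

Lemma alpha_eq : alpha = (1 + sqrt 5) / 2.
Proof. reflexivity. Qed.

Lemma beta_eq : beta = (1 - sqrt 5) / 2.
Proof.
  destruct s5_facts as [H1 H2]. unfold beta, alpha.
  field_simplify_eq; [nra|lra].
Qed.

Lemma alpha_sq : alpha * alpha = alpha + 1.
Proof. destruct s5_facts. rewrite alpha_eq. nra. Qed.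

Lemma beta_sq : beta * beta = beta + 1.
Proof. destruct s5_facts. rewrite beta_eq. nra. Qed.

Lemma alpha_pos : 0 < alpha.
Proof. destruct s5_facts. rewrite alpha_eq. lra. Qed.

Lemma s5_lt3 : sqrt 5 < 3.
Proof. destruct s5_facts. nra. Qed.

Lemma pow_fib (y : R) n : y * y = y + 1 -> y ^ (S (S n)) = y ^ (S n) + y ^ n.
Proof. intros H. simpl. replace (y * (y * y ^ n)) with ((y*y) * y^n) by ring. rewrite H. ring. Qed.

Lemma pow_fib' (y : R) n : y * y = 1 - y -> y ^ (S (S n)) = y ^ n - y ^ (S n).
Proof. intros H. simpl. replace (y * (y * y ^ n)) with ((y*y) * y^n) by ring. rewrite H. ring. Qed.

Definition cA (a b : R) := (b - a * beta) / (alpha - beta).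
Definition cB (a b : R) := (a * alpha - b) / (alpha - beta).

Lemma ab_diff : alpha - beta = sqrt 5.
Proof. rewrite alpha_eq, beta_eq. field. Qed.

Lemma gib_pos_binet a b : forall n, gib_pos a b n = cA a b * alpha ^ n + cB a b * beta ^ n.
Proof.
  destruct s5_facts as [H1 H2].
  assert (Hd : alpha - beta <> 0) by (rewrite ab_diff; lra).
  assert (H : forall m, gib_pos a b m = cA a b * alpha ^ m + cB a b * beta ^ m /\
                    gib_pos a b (S m) = cA a b * alpha ^ (S m) + cB a b * beta ^ (S m)).
  { induction m as [|n IH].
    - split; simpl; unfold cA, cB; field; auto.
    - destruct IH as [IH1 IH2]. split; [exact IH2|].
      change (gib_pos a b (S (S n))) with (gib_pos a b (S n) + gib_pos a b n).
      rewrite IH1, IH2, (pow_fib alpha n alpha_sq), (pow_fib beta n beta_sq). ring. }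
  intros n; apply H.
Qed.

Lemma gib_neg_binet a b : forall n, gib_neg a b n = cA a b * (/ alpha) ^ n + cB a b * (/ beta) ^ n.
Proof.
  destruct s5_facts as [H1 H2].
  assert (Hd : alpha - beta <> 0) by (rewrite ab_diff; lra).
  assert (Ha : alpha <> 0) by (pose proof alpha_pos; lra).
  assert (Hb : beta <> 0) by (unfold beta; apply Ropp_neq_0_compat, Rinv_neq_0_compat; exact Ha).
  assert (Hia : / alpha * / alpha = 1 - / alpha).
  { pose proof alpha_sq. field_simplify_eq; auto. nra. }
  assert (Hib : / beta * / beta = 1 - / beta).
  { pose proof beta_sq. field_simplify_eq; auto. nra. }
  assert (H : forall m, gib_neg a b m = cA a b * (/alpha) ^ m + cB a b * (/beta) ^ m /\
                    gib_neg a b (S m) = cA a b * (/alpha) ^ (S m) + cB a b * (/beta) ^ (S m)).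
  { induction m as [|n IH].
    - split; simpl; unfold cA, cB. field; auto.
      unfold beta. pose proof alpha_sq as Hq.
      assert (E3 : alpha^3 = 2*alpha+1) by (simpl; nra).
      assert (E4 : alpha^4 = 3*alpha+2) by (simpl; nra).
      field_simplify_eq. rewrite E3, E4. ring.
      split; [auto|nra].
    - destruct IH as [IH1 IH2]. split; [exact IH2|].
      change (gib_neg a b (S (S n))) with (gib_neg a b n - gib_neg a b (S n)).
      rewrite IH1, IH2, (pow_fib' (/alpha) n Hia), (pow_fib' (/beta) n Hib). ring. }
  intros n; apply H.
Qed.

Lemma alpha_ne : alpha <> 0.
Proof. pose proof alpha_pos; lra. Qed.
Lemma beta_ne : beta <> 0.
Proof. unfold beta; apply Ropp_neq_0_compat, Rinv_neq_0_compat, alpha_ne. Qed.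

Lemma G_binet a b j : G a b j = cA a b * powerRZ alpha j + cB a b * powerRZ beta j.
Proof.
  destruct j as [|p|p]; simpl.
  - unfold cA, cB. rewrite ab_diff. rewrite beta_eq, alpha_eq. destruct s5_facts. field. lra.
  - apply gib_pos_binet.
  - rewrite gib_neg_binet, !pow_inv. reflexivity.
Qed.

Lemma G_shift a b t n : G a b (Z.of_nat n + t) =
  cA a b * powerRZ alpha t * alpha ^ n + cB a b * powerRZ beta t * beta ^ n.
Proof.
  rewrite G_binet, !powerRZ_add by (apply alpha_ne || apply beta_ne).
  rewrite <- !pow_powerRZ. ring.
Qed.

Definition fval (x : R) := - ln (1 - 4 * x) / (2 * sqrt (1 - 4 * x)).

Lemma series_G a b t : is_series (fun k : nat => let n := S k in
        Binomial.C (2 * n)%nat n * (Onum n * G a b (Z.of_nat n + t)) / 12 ^ n)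
   (cA a b * powerRZ alpha t * fval (alpha / 12) + cB a b * powerRZ beta t * fval (beta / 12)).
Proof.
  destruct s5_facts as [H1 H2]. pose proof s5_lt3.
  assert (Ha : Rabs (alpha/12) < 1/6).
  { rewrite alpha_eq. apply Rabs_def1; lra. }
  assert (Hb : Rabs (beta/12) < 1/6).
  { rewrite beta_eq. apply Rabs_def1; lra. }
  pose proof (is_series_scal_l (cA a b * powerRZ alpha t) _ _ (core _ Ha)) as S1.
  pose proof (is_series_scal_l (cB a b * powerRZ beta t) _ _ (core _ Hb)) as S2.
  pose proof (is_series_plus _ _ _ _ S1 S2) as S3.
  eapply is_series_ext; [|exact S3].
  intros k. cbv zeta beta. rewrite G_shift.
  change (plus ?x ?y) with (x + y). change (scal ?c ?x) with (c * x). unfold ac, bc.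
  assert (H12 : 12 ^ S k <> 0) by (apply pow_nonzero; lra).
  unfold Rdiv. rewrite !Rpow_mult_distr, !pow_inv.
  match goal with |- ?l = ?r => change (@eq R l r) end. ring.
Qed.

Lemma sq_eq x y : 0 <= x -> 0 <= y -> x * x = y * y -> x = y.
Proof. intros. nra. Qed.

Definition Kc := sqrt 3 * sqrt (alpha + 2) / 10.

Lemma Kc_pos : 0 < Kc.
Proof.
  unfold Kc. pose proof alpha_pos.
  assert (0 < sqrt 3) by (apply sqrt_lt_R0; lra).
  assert (0 < sqrt (alpha+2)) by (apply sqrt_lt_R0; lra). nra.
Qed.

Lemma Kc_sq : Kc * Kc = 3 * (alpha + 2) / 100.
Proof.
  unfold Kc. pose proof alpha_pos.
  assert (sqrt 3 * sqrt 3 = 3) by (apply sqrt_sqrt; lra).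
  assert (sqrt (alpha+2) * sqrt (alpha+2) = alpha+2) by (apply sqrt_sqrt; lra).
  replace (sqrt 3 * sqrt (alpha + 2) / 10 * (sqrt 3 * sqrt (alpha + 2) / 10))
    with ((sqrt 3 * sqrt 3) * (sqrt (alpha+2) * sqrt (alpha+2)) / 100) by field.
  rewrite H0, H1. reflexivity.
Qed.

Lemma HP : / (2 * sqrt (1 - 4 * (alpha / 12))) = sqrt 5 * Kc.
Proof.
  destruct s5_facts as [H1 H2]. pose proof s5_lt3 as H3. pose proof Kc_pos as HK. pose proof Kc_sq as HK2.
  assert (Hpos : 0 < 1 - 4 * (alpha / 12)) by (rewrite alpha_eq; lra).
  assert (Hp : 0 < sqrt (1 - 4 * (alpha / 12))) by (apply sqrt_lt_R0; lra).
  assert (Hp2 : sqrt (1 - 4 * (alpha / 12)) * sqrt (1 - 4 * (alpha / 12)) = 1 - 4 * (alpha / 12)) by (apply sqrt_sqrt; lra).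
  set (p := sqrt (1 - 4 * (alpha / 12))) in *.
  assert (E : p * (sqrt 5 * Kc) = 1/2).
  { apply sq_eq; [apply Rmult_le_pos; [lra|apply Rmult_le_pos; lra]|lra|].
    replace (p * (sqrt 5 * Kc) * (p * (sqrt 5 * Kc))) with ((p*p) * (sqrt 5 * sqrt 5) * (Kc * Kc)) by ring.
    rewrite Hp2, H2, HK2. rewrite alpha_eq. nra. }
  apply (Rmult_eq_reg_l (2 * p)); [|lra]. rewrite Rinv_r by lra. lra.
Qed.

Lemma HQ : / (2 * sqrt (1 - 4 * (beta / 12))) = sqrt 5 * Kc / alpha.
Proof.
  destruct s5_facts as [H1 H2]. pose proof s5_lt3 as H3. pose proof Kc_pos as HK. pose proof Kc_sq as HK2.
  pose proof alpha_pos.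
  assert (Hpos : 0 < 1 - 4 * (beta / 12)) by (rewrite beta_eq; lra).
  assert (Hp : 0 < sqrt (1 - 4 * (beta / 12))) by (apply sqrt_lt_R0; lra).
  assert (Hp2 : sqrt (1 - 4 * (beta / 12)) * sqrt (1 - 4 * (beta / 12)) = 1 - 4 * (beta / 12)) by (apply sqrt_sqrt; lra).
  set (p := sqrt (1 - 4 * (beta / 12))) in *.
  assert (E : p * (sqrt 5 * Kc) = alpha/2).
  { apply sq_eq; [apply Rmult_le_pos; [lra|apply Rmult_le_pos; lra]|lra|].
    replace (p * (sqrt 5 * Kc) * (p * (sqrt 5 * Kc))) with ((p*p) * (sqrt 5 * sqrt 5) * (Kc * Kc)) by ring.
    rewrite Hp2, H2, HK2. rewrite beta_eq, alpha_eq. nra. }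
  apply (Rmult_eq_reg_l (2 * p)); [|lra]. rewrite Rinv_r by lra.
  replace (2 * p * (sqrt 5 * Kc / alpha)) with (2 * (p * (sqrt 5 * Kc)) / alpha) by (field; lra).
  rewrite E. field. lra.
Qed.

Lemma Hla : ln (1 - 4 * (alpha / 12)) = ln (sqrt 5 / 3) - ln alpha.
Proof.
  destruct s5_facts as [H1 H2]. pose proof alpha_pos.
  rewrite <- ln_div by lra. f_equal. rewrite alpha_eq. field_simplify_eq; [nra|lra].
Qed.

Lemma Hlb : ln (1 - 4 * (beta / 12)) = ln (sqrt 5 / 3) + ln alpha.
Proof.
  destruct s5_facts as [H1 H2]. pose proof alpha_pos.
  rewrite <- ln_mult by lra. f_equal. rewrite beta_eq, alpha_eq. field_simplify_eq. nra.
Qed.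

Lemma powerRZ_m1 x : powerRZ x (-1) = / x.
Proof. simpl. rewrite Rmult_1_r. reflexivity. Qed.

Lemma value_eq a b t :
  cA a b * powerRZ alpha t * fval (alpha / 12) + cB a b * powerRZ beta t * fval (beta / 12) =
  sqrt 3 * sqrt (alpha + 2) / 10 *
        ((a * (powerRZ alpha (t - 1) - powerRZ beta t)
          + b * (powerRZ alpha t - powerRZ beta (t + 1))) * ln alpha
         - (a * (powerRZ alpha (t - 1) + powerRZ beta t)
            + b * (powerRZ alpha t + powerRZ beta (t + 1))) * ln (sqrt 5 / 3)).
Proof.
  destruct s5_facts as [H1 H2]. pose proof alpha_ne as Ha.
  assert (Fa : fval (alpha / 12) = (ln alpha - ln (sqrt 5 / 3)) * (sqrt 5 * Kc)).
  { unfold fval. unfold Rdiv at 1. rewrite HP, Hla. ring. }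
  assert (Fb : fval (beta / 12) = - (ln (sqrt 5 / 3) + ln alpha) * (sqrt 5 * Kc / alpha)).
  { unfold fval. unfold Rdiv at 1. rewrite HQ, Hlb. ring. }
  rewrite Fa, Fb.
  replace (t - 1)%Z with (t + -1)%Z by lia.
  rewrite !powerRZ_add by (apply alpha_ne || apply beta_ne).
  rewrite powerRZ_m1.
  change (powerRZ beta 1) with (beta * 1).
  fold Kc. unfold cA, cB. rewrite ab_diff.
  set (X := powerRZ alpha t). set (Y := powerRZ beta t).
  unfold beta. field. split; lra.
Qed.

Theorem theorem16 : forall t : Z,
  is_series (fun k : nat => let n := S k in
      Binomial.C (2 * n)%nat n * (Onum n * Luc (Z.of_nat n + t)) / 12 ^ n)
    (sqrt 15 * sqrt (alpha + 2) / 10 *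
      ((powerRZ alpha t + powerRZ beta (t + 1)) * ln alpha
       - (powerRZ alpha t - powerRZ beta (t + 1)) * ln (sqrt 5 / 3)))
  /\
  is_series (fun k : nat => let n := S k in
      Binomial.C (2 * n)%nat n * (Onum n * Fib (Z.of_nat n + t)) / 12 ^ n)
    (sqrt 3 * sqrt (alpha + 2) / 10 *
      ((powerRZ alpha t - powerRZ beta (t + 1)) * ln alpha
       - (powerRZ alpha t + powerRZ beta (t + 1)) * ln (sqrt 5 / 3)))
  /\
  (forall a b : R, ~ (a = 0 /\ b = 0) ->
    is_series (fun k : nat => let n := S k in
        Binomial.C (2 * n)%nat n * (Onum n * G a b (Z.of_nat n + t)) / 12 ^ n)
      (sqrt 3 * sqrt (alpha + 2) / 10 *
        ((a * (powerRZ alpha (t - 1) - powerRZ beta t)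
          + b * (powerRZ alpha t - powerRZ beta (t + 1))) * ln alpha
         - (a * (powerRZ alpha (t - 1) + powerRZ beta t)
            + b * (powerRZ alpha t + powerRZ beta (t + 1))) * ln (sqrt 5 / 3)))).
Proof.
  intros t.
  assert (Hgen : forall a b, is_series (fun k : nat => let n := S k in
        Binomial.C (2 * n)%nat n * (Onum n * G a b (Z.of_nat n + t)) / 12 ^ n)
      (sqrt 3 * sqrt (alpha + 2) / 10 *
        ((a * (powerRZ alpha (t - 1) - powerRZ beta t)
          + b * (powerRZ alpha t - powerRZ beta (t + 1))) * ln alpha
         - (a * (powerRZ alpha (t - 1) + powerRZ beta t)
            + b * (powerRZ alpha t + powerRZ beta (t + 1))) * ln (sqrt 5 / 3)))).
  { intros a b. rewrite <- value_eq. apply series_G. }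
  split; [|split].
  - unfold Luc.
    match goal with |- is_series _ ?v => replace v with
      (sqrt 3 * sqrt (alpha + 2) / 10 *
        ((2 * (powerRZ alpha (t - 1) - powerRZ beta t)
          + 1 * (powerRZ alpha t - powerRZ beta (t + 1))) * ln alpha
         - (2 * (powerRZ alpha (t - 1) + powerRZ beta t)
            + 1 * (powerRZ alpha t + powerRZ beta (t + 1))) * ln (sqrt 5 / 3))) end.
    + apply Hgen.
    + match goal with |- ?l = ?r => change (@eq R l r) end.
      destruct s5_facts as [H1 H2]. pose proof alpha_pos as Hap.
      replace (sqrt 15) with (sqrt 3 * sqrt 5) by (rewrite <- sqrt_mult by lra; f_equal; ring).
      replace (t - 1)%Z with (t + -1)%Z by lia.
      rewrite !powerRZ_add by (apply alpha_ne || apply beta_ne).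
      rewrite powerRZ_m1.
      change (powerRZ beta 1) with (beta * 1).
      set (X := powerRZ alpha t). set (Y := powerRZ beta t).
      assert (Hs : sqrt 5 = 2 / alpha + 1).
      { rewrite alpha_eq. field_simplify_eq; nra. }
      assert (Hsb : sqrt 5 * beta = -2 - beta).
      { rewrite beta_eq. nra. }
      set (s := sqrt 5) in *.
      replace (sqrt 3 * s * sqrt (alpha + 2) / 10 *
        ((X + Y * (beta * 1)) * ln alpha - (X - Y * (beta * 1)) * ln (s / 3)))
      with (sqrt 3 * sqrt (alpha + 2) / 10 *
        (X * ln alpha * s + Y * ln alpha * (s * beta) - X * ln (s/3) * s + Y * ln (s/3) * (s * beta)))
      by (match goal with |- ?l = ?r => change (@eq R l r) end; field).
      rewrite Hsb.
      replace (X * ln alpha * s) with (X * ln alpha * (2 / alpha + 1)) by (rewrite <- Hs; reflexivity).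
      replace (X * ln (s / 3) * s) with (X * ln (s / 3) * (2 / alpha + 1)) by (rewrite <- Hs; reflexivity).
      field. lra.
  - unfold Fib.
    match goal with |- is_series _ ?v => replace v with
      (sqrt 3 * sqrt (alpha + 2) / 10 *
        ((0 * (powerRZ alpha (t - 1) - powerRZ beta t)
          + 1 * (powerRZ alpha t - powerRZ beta (t + 1))) * ln alpha
         - (0 * (powerRZ alpha (t - 1) + powerRZ beta t)
            + 1 * (powerRZ alpha t + powerRZ beta (t + 1))) * ln (sqrt 5 / 3))) by (match goal with |- ?l = ?r => change (@eq R l r) end; ring) end.
    apply Hgen.
  - intros a b _. apply Hgen.
Qed.
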